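(* Let $h>0$ and $f\in H^\omega(X)\cap L_{\rfloor\cdot\lceil_h}(X)$. Then \[ \|f\|_{\mathcal B(X)}\le\|f-S_hf\|_{\mathcal B(X)}+\frac{\rfloor f\lceil_h}{\mu(B_h)}\le\frac{\|f\|_{H^\omega(X)}}{\mu(B_h)}\int_{B_h}\omega(\rho(u,\theta))\,d\mu(u)+\frac{\rfloor f\lceil_h}{\mu(B_h)}. \] This inequality is sharp: both inequalities become equalities for the function $f_{e,h}(x)=(\omega(h)-\omega(\rho(x,\theta)))_+$. Moreover $f_{e,h}\in H^\omega(X)\cap L_{\rfloor\cdot\lceil}(X)$ and $\rfloor f_{e,h}\lceil=\rfloor f_{e,h}\lceil_h$; consequently, for every $h>0$ and every $f\in H^\omega(X)\cap L_{\rfloor\cdot\lceil}(X)$, \[ \|f\|_{\mathcal B(X)}\le\frac{\|f\|_{H^\omega(X)}}{\mu(B_h)}\int_{B_h}\omega(\rho(u,\theta))\,d\mu(u)+\frac{\rfloor f\lceil}{\mu(B_h)}, \] and this inequality is sharp on the class $H^\omega(X)\cap L_{\rfloor\cdot\lceil}(X)$ (equality for $f_{e,h}$).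
   Context: Standing setting: $(X,\rho)$ is a metric space with a Borel measure $\mu$. $X$ is a commutative monoid, i.e. there is an associative and commutative binary operation $+$ on $X$ with a neutral element $\theta$. The measure is translation invariant: $\mu(x+Q)=\mu(Q)$ for every $\mu$-measurable $Q\subset X$ and every $x\in X$; correspondingly $\int_{B_h}g(x+u)\,d\mu(u)=\int_{x+B_h}g(u)\,d\mu(u)$ for locally integrable $g$. Moreover $\rho(x+y,x)\le\rho(y,\theta)$ for all $x,y\in X$. $B_h$ denotes the open ball of radius $h$ centered at $\theta$, and it is assumed that $0<\mu(B_h)<\infty$ and $B_h\neq\{\theta\}$ for every $h>0$. Every continuous real function on $X$ is integrable on every open ball. $L_{\mathrm{loc}}(X)$ is the space of functions $f\colon X\to\mathbb R$ integrable on every open ball. For $f\in L_{\mathrm{loc}}(X)$ and $h>0$: $\rfloor f\lceil_h=\sup_{x\in X}\left|\int_{x+B_h}f(u)\,d\mu(u)\right|$ and $\rfloor f\lceil=\sup_{h>0}\rfloor f\lceil_h$; $L_{\rfloor\cdot\lceil_h}(X)$ (resp. $L_{\rfloor\cdot\lceil}(X)$) is the set of $f\in L_{\mathrm{loc}}(X)$ with $\rfloor f\lceil_h<\infty$ (resp. $\rfloor f\lceil<\infty$). For a function $f$, $\|f\|_{\mathcal B(X)}=\sup_{x\in X}|f(x)|$. $\alpha_+=\max\{\alpha,0\}$. A modulus of continuity is a function $\omega\colon[0,\infty)\to[0,\infty)$ that is non-decreasing, semi-additive ($\omega(s+t)\le\omega(s)+\omega(t)$), with $\omega(0)=0$, and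 not identically zero (so $\omega(t)>0$ for $t>0$). $H^\omega(X)$ is the space of $f\colon X\to\mathbb R$ with $\|f\|_{H^\omega(X)}:=\sup_{x\neq y}\frac{|f(x)-f(y)|}{\omega(\rho(x,y))}<\infty$. For $h>0$ and $f\in L_{\mathrm{loc}}(X)$, $S_hf(x)=\frac{1}{\mu(B_h)}\int_{B_h}f(x+u)\,d\mu(u)$; as an operator $L_{\rfloor\cdot\lceil_h}(X)\to\mathcal B(X)$ its norm is $1/\mu(B_h)$. *)

(* Defs.v *)
From HB Require Import structures.
From mathcomp Require Import all_boot all_order all_algebra.
From mathcomp Require Import all_classical all_reals all_analysis.
Set Implicit Arguments. Unset Strict Implicit. Unset Printing Implicit Defensive.
Import Order.TTheory GRing.Theory Num.Theory.
Local Open Scope classical_set_scope.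
Local Open Scope ring_scope.

Section Defs.
Context {R : realType} {d : measure_display} {X : measurableType d}.
Variables (rho : X -> X -> R) (add : X -> X -> X) (theta : X)
  (mu : {measure set X -> \bar R}).

Definition rball (x : X) (r : R) : set X := [set y | rho x y < r].
Definition Bh (h : R) : set X := [set u | rho u theta < h].
Definition transl (x : X) (Q : set X) : set X := [set add x u | u in Q].

Definition ropen (A : set X) : Prop :=
  forall x, A x -> exists r : R, 0 < r /\ rball x r `<=` A.
Definition rcontinuous (g : X -> R) : Prop :=
  forall x (e : R), 0 < e -> exists del : R, 0 < del /\
    forall y, rho x y < del -> `|g x - g y| < e.

Definition Lloc (f : X -> R) : Prop :=
  forall x (r : R), 0 < r -> mu.-integrable (rball x r) (EFin \o f).

Definition standing_setting : Prop :=
      ((forall x y, 0 <= rho x y) /\ (forall x y, rho x y = 0 <-> x = y) /\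
      (forall x y, rho x y = rho y x) /\
      (forall x y z, rho x z <= rho x y + rho y z)) /\
      (* Borel measure: every open set is measurable *)
      (forall A, ropen A -> measurable A) /\
      (forall x y z, add x (add y z) = add (add x y) z) /\
      (forall x y, add x y = add y x) /\ (forall x, add theta x = x) /\
      (forall x Q, measurable Q -> measurable (transl x Q) /\
          mu (transl x Q) = mu Q) /\
      (forall (g : X -> R), Lloc g -> forall x (h : R), 0 < h ->
         (\int[mu]_(u in Bh h) (g (add x u))%:E =
          \int[mu]_(u in transl x (Bh h)) (g u)%:E)%E) /\
      (forall x y, rho (add x y) x <= rho y theta) /\
      (forall h : R, 0 < h -> (0 < mu (Bh h))%E /\ (mu (Bh h) < +oo)%E /\
          Bh h <> [set theta]) /\
      (forall g, rcontinuous g -> forall x (r : R), 0 < r ->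
          mu.-integrable (rball x r) (EFin \o g)).

Definition snorm_h (f : X -> R) (h : R) : \bar R :=
  ereal_sup [set (`| \int[mu]_(u in transl x (Bh h)) (f u)%:E |)%E | x in setT].
Definition snorm (f : X -> R) : \bar R :=
  ereal_sup [set snorm_h f h | h in [set h : R | 0 < h]].
Definition in_Lh (f : X -> R) (h : R) : Prop := Lloc f /\ (snorm_h f h < +oo)%E.
Definition in_L (f : X -> R) : Prop := Lloc f /\ (snorm f < +oo)%E.

Definition normB (f : X -> R) : \bar R := ereal_sup [set (`|f x|)%:E | x in setT].

Definition Sh (h : R) (f : X -> R) (x : X) : R :=
  fine (\int[mu]_(u in Bh h) (f (add x u))%:E) / fine (mu (Bh h)).

Variable omega : R -> R.
Definition modulus : Prop :=
  [/\ (forall t, 0 <= t -> 0 <= omega t),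
      (forall s t, 0 <= s -> s <= t -> omega s <= omega t),
      (forall s t, 0 <= s -> 0 <= t -> omega (s + t) <= omega s + omega t),
      omega 0 = 0 & exists t, 0 <= t /\ omega t <> 0].

Definition normH (f : X -> R) : \bar R :=
  ereal_sup [set z | exists x y, x <> y /\ z = (`|f x - f y| / omega (rho x y))%:E].
Definition in_H (f : X -> R) : Prop := (normH f < +oo)%E.

Definition Iomega (h : R) : \bar R := (\int[mu]_(u in Bh h) (omega (rho u theta))%:E)%E.

Definition fe (h : R) (x : X) : R := Num.max (omega h - omega (rho x theta)) 0.

End Defs.

(* Main.v *)
Require Import Defs.
From mathcomp Require Import all_boot all_order all_algebra.
From mathcomp Require Import all_classical all_reals all_analysis.
From mathcomp Require Import measurable_realfun.
From mathcomp Require Import ring lra.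
Import Order.TTheory GRing.Theory Num.Theory.
Local Open Scope classical_set_scope.
Local Open Scope ring_scope.

Section Main.
Context (R : realType) (d : measure_display) (X : measurableType d)
  (rho : X -> X -> R) (add : X -> X -> X) (theta : X)
  (mu : {measure set X -> \bar R}) (omega : R -> R).
Hypothesis rho_ge0 : forall x y, 0 <= rho x y.
Hypothesis rho_eq0 : forall x y, rho x y = 0 <-> x = y.
Hypothesis rhoC : forall x y, rho x y = rho y x.
Hypothesis rho_tri : forall x y z, rho x z <= rho x y + rho y z.
Hypothesis open_meas : forall A, ropen rho A -> measurable A.
Hypothesis add0 : forall x, add theta x = x.
Hypothesis transl_meas : forall x Q, measurable Q -> measurable (transl add x Q) /\
          mu (transl add x Q) = mu Q.
Hypothesis trans_int : forall (g : X -> R), Lloc rho mu g -> forall x (h : R), 0 < h ->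
         (\int[mu]_(u in Bh rho theta h) (g (add x u))%:E =
          \int[mu]_(u in transl add x (Bh rho theta h)) (g u)%:E)%E.
Hypothesis add_le : forall x y, rho (add x y) x <= rho y theta.
Hypothesis Bh_pos : forall h : R, 0 < h -> (0 < mu (Bh rho theta h))%E /\ (mu (Bh rho theta h) < +oo)%E /\
          Bh rho theta h <> [set theta].
Hypothesis cont_int : forall g, rcontinuous rho g -> forall x (r : R), 0 < r ->
          mu.-integrable (rball rho x r) (EFin \o g).
Hypothesis Hom : modulus omega.

Local Notation Bh := (Bh rho theta).
Local Notation T x h := (transl add x (Bh h)).

Lemma ropen_lt (x : X) (r : R) : ropen rho [set y | rho y x < r].
Proof.
move=> y /= yx; exists (r - rho y x); split; first by rewrite subr_gt0.
move=> z; rewrite /rball /= => yz.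
by rewrite (le_lt_trans (rho_tri z y x))// [rho z y]rhoC -ltrBrDr.
Qed.

Lemma Bh_meas h : measurable (Bh h).
Proof. exact: open_meas (ropen_lt theta h). Qed.

Lemma rball_meas x h : measurable (rball rho x h).
Proof.
apply: open_meas; have -> : rball rho x h = [set y | rho y x < h].
  by apply/seteqP; split => y /=; rewrite /rball rhoC.
exact: ropen_lt.
Qed.

Lemma T_meas x h : measurable (T x h).
Proof. exact: proj1 (transl_meas x _ (Bh_meas h)). Qed.

Lemma T_mu x h : mu (T x h) = mu (Bh h).
Proof. exact: proj2 (transl_meas x _ (Bh_meas h)). Qed.

Lemma T_sub x h : T x h `<=` rball rho x h.
Proof.
move=> _ [u /= uh <-]; rewrite /rball /= rhoC.
exact: le_lt_trans (add_le x u) uh.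
Qed.

Lemma Bh_sub h : Bh h `<=` rball rho theta h.
Proof. by move=> u; rewrite /rball /Bh /= rhoC. Qed.

Lemma cst_Lloc c : Lloc rho mu (fun _ => c).
Proof.
move=> x r r0; apply: cont_int => // y e e0; exists 1; split => // z _.
by rewrite subrr normr0.
Qed.

Lemma omega_pos t : 0 < t -> 0 < omega t.
Proof.
case: Hom => o0 ond osa oz [t0 [t00 ot0]] tp.
rewrite lt_def o0 ?ltW// andbT; apply/eqP => ot.
have H n : omega (t *+ n) <= 0.
  elim: n => [|n IH]; first by rewrite mulr0n oz.
  rewrite mulrS; apply: le_trans (osa _ _ (ltW tp) (mulrn_wge0 _ (ltW tp))) _.
  by rewrite ot add0r.
apply: ot0; apply/eqP; rewrite eq_le o0// andbT.
have [n tn] : exists n, t0 < t *+ n.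
  exists (Num.bound (t0 / t)).
  rewrite -mulr_natr -ltr_pdivrMl// mulrC; apply: archi_boundP.
  by rewrite divr_ge0// ltW.
exact: le_trans (ond _ _ t00 (ltW tn)) (H n).
Qed.


Lemma rho_meas x : measurable_fun setT (fun v => rho v x).
Proof.
apply: (measurability (@RGenInftyO.G R)) => [|/= _ [_] [r] -> <-].
  exact: RGenInftyO.measurableE.
rewrite setTI; apply: open_meas.
have -> : (fun v => rho v x) @^-1` `]-oo, r[ = [set y | rho y x < r].
  by apply/seteqP; split => y /=; rewrite in_itv.
exact: ropen_lt.
Qed.

Lemma w_meas x : measurable_fun setT (fun v => omega (rho v x)).
Proof.
case: Hom => o0 ond _ _ _.
have -> : (fun v => omega (rho v x)) = (fun t => omega (Num.max t 0)) \o (fun v => rho v x).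
  by apply/funext => v /=; rewrite max_l.
apply: measurableT_comp; last exact: rho_meas.
apply: nondecreasing_measurable => // s t st.
apply: ond; first by rewrite le_max lexx orbT.
exact: (le_max2 st (lexx 0)).
Qed.

Lemma le_int_nm D (f1 f2 : X -> \bar R) : (forall x, D x -> 0 <= f1 x)%E ->
  (forall x, D x -> f1 x <= f2 x)%E ->
  (\int[mu]_(x in D) f1 x <= \int[mu]_(x in D) f2 x)%E.
Proof.
move=> f10 f12; rewrite !ge0_integralE //; last first.
  by move=> x Dx; exact: le_trans (f10 x Dx) (f12 x Dx).
apply: ereal_sup_le => _ [g /= Hg <-]; exists g => // x.
apply: le_trans (Hg x) _; rewrite /patch; case: ifP => // /[1!inE] Dx.
exact: f12.
Qed.


Local Notation m h := (fine (mu (Bh h))).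

Lemma mBh h : 0 < h -> mu (Bh h) = (m h)%:E /\ 0 < m h.
Proof.
move=> h0; have [p [f _]] := Bh_pos h h0.
have fin : mu (Bh h) \is a fin_num by rewrite ge0_fin_numE// ltW.
by split; [rewrite fineK | rewrite -lte_fin fineK].
Qed.

Lemma Lloc_T f x h : 0 < h -> Lloc rho mu f ->
  mu.-integrable (T x h) (EFin \o f).
Proof.
move=> h0 Lf; apply: integrableS (Lf x h h0) => //.
- exact: rball_meas.
- exact: T_meas.
- exact: T_sub.
Qed.

Lemma Lloc_Bh f h : 0 < h -> Lloc rho mu f ->
  mu.-integrable (Bh h) (EFin \o f).
Proof.
move=> h0 Lf; apply: integrableS (Lf theta h h0) => //.
- exact: rball_meas.
- exact: Bh_meas.
- exact: Bh_sub.
Qed.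

Lemma Lloc_absB f c : Lloc rho mu f -> Lloc rho mu (fun v => `|c - f v|).
Proof.
move=> Lf x r r0.
have := integrable_abse (integrableB (rball_meas x r) (cst_Lloc c x r r0) (Lf x r r0)).
apply: eq_integrable; first exact: rball_meas.
by move=> v _ /=.
Qed.

Lemma Sh_eq f x h : 0 < h -> Lloc rho mu f ->
  Sh rho add theta mu h f x = fine (\int[mu]_(u in T x h) (f u)%:E)%E / m h.
Proof. by move=> h0 Lf; rewrite /Sh trans_int. Qed.

Lemma w_int h : 0 < h ->
  mu.-integrable (Bh h) (EFin \o (fun u => omega (rho u theta))).
Proof.
move=> h0; case: Hom => o0 ond _ _ _.
apply: (le_integrable (Bh_meas h) _ _ (Lloc_Bh _ _ h0 (cst_Lloc (omega h)))).
- by apply/measurable_EFinP; apply: measurable_funTS; exact: w_meas.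
move=> u Bu /=; rewrite lee_fin !ger0_norm ?o0 ?(ltW h0)//.
by apply: ond => //; exact: ltW.
Qed.

Local Notation I h := (fine (Iomega rho theta mu omega h)).

Lemma Iomega_fin h : 0 < h -> Iomega rho theta mu omega h = (I h)%:E.
Proof.
move=> h0; rewrite fineK// /Iomega; have := integrable_fin_num (Bh_meas h) (w_int h h0). exact.
Qed.


Lemma core f h x N : 0 < h -> Lloc rho mu f -> 0 <= N ->
  (forall y z, `|f y - f z| <= N * omega (rho y z)) ->
  `|f x - Sh rho add theta mu h f x| <= N * I h / m h.
Proof.
move=> h0 Lf N0 Hf.
case: Hom => o0 ond _ _ _.
have [mE m0] := mBh h h0.
set c := f x.
have iT := Lloc_T f x h h0 Lf.
have mT := T_meas x h.
set J := (\int[mu]_(u in T x h) (f u)%:E)%E.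
have Jfin : J \is a fin_num by have := integrable_fin_num mT iT; exact.
have E1 : (\int[mu]_(u in T x h) ((c - f u)%:E) = (c * m h - fine J)%:E)%E.
  under eq_integral do rewrite EFinB.
  rewrite integralB_EFin //; last exact: (Lloc_T (fun _ => c) x h h0 (cst_Lloc c)).
  by rewrite integral_cst // T_mu [in LHS]mE EFinB EFinM (fineK Jfin).
have mg : measurable_fun (T x h) (fun u => (c - f u)%:E).
  apply/measurable_EFinP; apply: measurable_funB; first exact: measurable_cst.
  by apply/measurable_EFinP; case/integrableP: iT.
have E2 : (`|c * m h - fine J|%:E <= \int[mu]_(u in T x h) (`|c - f u|)%:E)%E.
  rewrite -abse_EFin -E1.
  under [X in (_ <= X)%E]eq_integral do rewrite -abse_EFin.
  exact: le_abse_integral.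
have E3 := trans_int _ (Lloc_absB f c Lf) x h h0.
have E4 : (\int[mu]_(u in Bh h) (`|c - f (add x u)|)%:E <=
           \int[mu]_(u in Bh h) (N * omega (rho u theta))%:E)%E.
  apply: le_int_nm => u Bu; rewrite lee_fin //.
  apply: le_trans (Hf x (add x u)) _; apply: ler_wpM2l => //.
  by apply: ond => //; rewrite rhoC; exact: add_le.
have E5 : (\int[mu]_(u in Bh h) (N * omega (rho u theta))%:E = (N * I h)%:E)%E.
  under eq_integral do rewrite EFinM.
  rewrite ge0_integralZl_EFin //; first by rewrite EFinM -(Iomega_fin h h0).
  - exact: Bh_meas.
  - by move=> u _; rewrite lee_fin o0.
  - by apply/measurable_EFinP; apply: measurable_funTS; exact: w_meas.
have key : `|c * m h - fine J| <= N * I h.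
  by rewrite -lee_fin (le_trans E2)// -E3 -E5.
rewrite Sh_eq // -/J.
have -> : c - fine J / m h = (c * m h - fine J) / m h.
  by field; rewrite gt_eqF.
rewrite normrM normfV (ger0_norm (ltW m0)).
by rewrite ler_pM2r // invr_gt0.
Qed.


Lemma exists_ne h : 0 < h -> exists u, Bh h u /\ u <> theta.
Proof.
move=> h0; case: (pselect (exists u, Bh h u /\ u <> theta)) => // H.
exfalso; apply: (proj2 (proj2 (Bh_pos h h0))).
apply/seteqP; split => u /=.
  move=> Bu; case: (pselect (u = theta)) => // ut.
  by exfalso; apply: H; exists u.
by move=> ->; rewrite /Bh /= (proj2 (rho_eq0 _ _) erefl).
Qed.

Lemma normH_fin f : in_H rho omega f -> exists N, normH rho omega f = N%:E /\
  0 <= N /\ forall y z, `|f y - f z| <= N * omega (rho y z).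
Proof.
move=> fH; have [u [_ ut]] := exists_ne 1 ltr01.
case: Hom => o0 ond _ oz _.
set z0 := `|f u - f theta| / omega (rho u theta).
have z0ge : (z0%:E <= normH rho omega f)%E.
  by apply: ereal_sup_ubound; exists u, theta.
have z00 : 0 <= z0 by rewrite divr_ge0 ?o0.
have fin : normH rho omega f \is a fin_num.
  rewrite fin_numE; apply/andP; split; last by rewrite lt_eqF.
  by apply/negP => /eqP E; move: z0ge; rewrite E leeNy_eq.
exists (fine (normH rho omega f)); split; first by rewrite fineK.
split; first by rewrite -lee_fin fineK // (le_trans _ z0ge).
move=> y z; have [->|yz] := eqVneq y z.
  by rewrite subrr normr0 mulr_ge0 ?o0 // -lee_fin fineK // (le_trans _ z0ge).
have rp : 0 < rho y z.
  by rewrite lt_def rho_ge0 andbT; apply/eqP => /rho_eq0 /eqP; rewrite (negbTE yz).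
have op := omega_pos _ rp.
rewrite -ler_pdivrMr // -lee_fin fineK //.
by apply: ereal_sup_ubound; exists y, z; split => //; apply/eqP.
Qed.

Lemma part1 h f : 0 < h -> in_H rho omega f -> in_Lh rho add theta mu f h ->
  (normB f <= normB (fun x => (f x - Sh rho add theta mu h f x)%R)
      + snorm_h rho add theta mu f h * ((m h)^-1)%:E <=
   normH rho omega f * ((m h)^-1)%:E * Iomega rho theta mu omega h
      + snorm_h rho add theta mu f h * ((m h)^-1)%:E)%E.
Proof.
move=> h0 fH [Lf _]; have [mE m0] := mBh h h0.
apply/andP; split.
  apply: ge_ereal_sup => _ [x _ <-].
  set g := fun x => f x - Sh rho add theta mu h f x.
  apply: (@le_trans _ _ ((`|g x| + `|Sh rho add theta mu h f x|)%:E)).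
    by rewrite lee_fin /g; have := ler_normD (f x - Sh rho add theta mu h f x) (Sh rho add theta mu h f x); rewrite subrK.
  rewrite EFinD; apply: leeD; first by apply: ereal_sup_ubound; exists x.
  set J := (\int[mu]_(u in T x h) (f u)%:E)%E.
  have Jfin : J \is a fin_num.
    by have := integrable_fin_num (T_meas x h) (Lloc_T f x h h0 Lf); exact.
  rewrite Sh_eq // -/J normrM normfV (ger0_norm (ltW m0)) EFinM.
  apply: lee_wpmul2r; first by rewrite lee_fin invr_ge0 ltW.
  rewrite -abse_EFin fineK //.
  by apply: ereal_sup_ubound; exists x.
apply: leeD2r.
have [N [NE [N0 HN]]] := normH_fin _ fH.
rewrite NE Iomega_fin // -!EFinM.
apply: ge_ereal_sup => _ [x _ <-]; rewrite lee_fin.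
apply: le_trans (core f h x N h0 Lf N0 HN) _.
by rewrite mulrAC.
Qed.


Lemma maxLip (a b D : R) : a - D <= b -> b - D <= a ->
  `|Num.max a 0 - Num.max b 0| <= D.
Proof.
move=> h1 h2; rewrite ler_distl.
have [ha|ha] := leP a 0; have [hb|hb] := leP b 0.
all: rewrite ?(max_r ha) ?(max_r hb) ?(max_l (ltW ha)) ?(max_l (ltW hb)).
all: apply/andP; split; lra.
Qed.

Local Notation g h := (fe rho theta omega h).

Lemma g_lip h y z : `|g h y - g h z| <= omega (rho y z).
Proof.
case: Hom => o0 ond osa _ _.
have tri a b : omega (rho a theta) <= omega (rho b theta) + omega (rho a b).
  rewrite addrC; apply: le_trans (osa _ _ (rho_ge0 _ _) (rho_ge0 _ _)).
  by apply: ond => //; rewrite rhoC [rho b _]rhoC [rho _ theta]rhoC rho_tri.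
apply: maxLip.
  by have := tri z y; rewrite [rho z y]rhoC; lra.
by have := tri y z; lra.
Qed.

Lemma g_ge0 h x : 0 <= g h x.
Proof. by rewrite /fe le_max lexx orbT. Qed.

Lemma g_le h x : 0 < h -> g h x <= omega h.
Proof.
case: Hom => o0 _ _ _ _ h0; rewrite /fe.
have p0 := o0 _ (rho_ge0 x theta); have q0 := o0 _ (ltW h0).
have [ha|ha] := leP (omega h - omega (rho x theta)) 0.
  by [].
lra.
Qed.

Lemma g_out h x : 0 < h -> ~ Bh h x -> g h x = 0.
Proof.
case: Hom => o0 ond _ _ _ h0 nB; rewrite /fe max_r // subr_le0.
apply: ond; first exact: ltW.
by rewrite leNgt; apply/negP.
Qed.

Lemma g_in h x : Bh h x -> g h x = omega h - omega (rho x theta).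
Proof.
case: Hom => o0 ond _ _ _ Bx; rewrite /fe max_l // subr_ge0.
by apply: ond => //; exact: ltW.
Qed.

Lemma g_theta h : 0 < h -> g h theta = omega h.
Proof.
case: Hom => _ _ _ oz _ h0.
by rewrite g_in ?(proj2 (rho_eq0 _ _) erefl) ?oz ?subr0 // /Bh /= (proj2 (rho_eq0 _ _) erefl).
Qed.

Lemma g_meas h : measurable_fun setT (g h).
Proof.
apply: measurable_maxr; last exact: measurable_cst.
apply: measurable_funB; first exact: measurable_cst.
exact: w_meas.
Qed.

Lemma g_Lloc h : 0 < h -> Lloc rho mu (g h).
Proof.
move=> h0 x r r0.
apply: (le_integrable (rball_meas x r) _ _ (cst_Lloc (omega h) x r r0)).
  by apply/measurable_EFinP; apply: measurable_funTS; exact: g_meas.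
move=> v _ /=; rewrite lee_fin !ger0_norm ?g_le ?g_ge0 //.
by case: Hom => o0 _ _ _ _; rewrite o0 // ltW.
Qed.


Lemma normH_g h : 0 < h -> normH rho omega (g h) = 1%:E.
Proof.
move=> h0; apply/eqP; rewrite eq_le; apply/andP; split.
  apply: ge_ereal_sup => _ [x [y [xy ->]]]; rewrite lee_fin.
  have rp : 0 < rho x y.
    rewrite lt_def rho_ge0 andbT; apply/eqP => /rho_eq0; exact: xy.
  have op := omega_pos _ rp.
  by rewrite ler_pdivrMr // mul1r g_lip.
have [u [Bu ut]] := exists_ne h h0.
apply: ereal_sup_ubound; exists theta, u; split; first by move=> E; apply: ut.
have rp : 0 < rho u theta.
  rewrite lt_def rho_ge0 andbT; apply/eqP => /rho_eq0; exact: ut.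
have op := omega_pos _ rp.
rewrite g_theta // g_in // [rho theta u]rhoC.
have -> : omega h - (omega h - omega (rho u theta)) = omega (rho u theta) by ring.
by rewrite ger0_norm ?divff // ?gt_eqF // ltW.
Qed.

Lemma A_eq h : 0 < h ->
  (\int[mu]_(u in Bh h) (g h u)%:E = (omega h * m h - I h)%:E)%E.
Proof.
move=> h0; have [mE m0] := mBh h h0.
rewrite (eq_integral (fun u => (omega h)%:E - (omega (rho u theta))%:E)%E); last first.
  by move=> u; rewrite inE => Bu; rewrite g_in // EFinB.
rewrite integralB_EFin //; last 3 first.
- exact: Bh_meas.
- exact: (Lloc_Bh _ _ h0 (cst_Lloc (omega h))).
- exact: w_int.
rewrite integral_cst; last exact: Bh_meas.
by rewrite [in LHS]mE EFinB EFinM -(Iomega_fin h h0).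
Qed.

Lemma int_T_le h h' x : 0 < h -> 0 < h' ->
  (`|\int[mu]_(u in T x h') (g h u)%:E| <= \int[mu]_(u in Bh h) (g h u)%:E)%E.
Proof.
move=> h0 h'0.
rewrite gee0_abs; last by apply: integral_ge0 => u _; rewrite lee_fin g_ge0.
rewrite (eq_integral ((fun u => (g h u)%:E) \_ (Bh h))); last first.
  move=> u _; rewrite /patch; case: ifPn => // /negP; rewrite inE => nB.
  by rewrite g_out.
rewrite -integral_mkcondr.
apply: ge0_subset_integral.
- by apply: measurableI; [exact: T_meas | exact: Bh_meas].
- exact: Bh_meas.
- by apply/measurable_EFinP; apply: measurable_funTS; exact: g_meas.
- by move=> u _; rewrite lee_fin g_ge0.
- exact: subIsetr.
Qed.

Lemma T_theta h : T theta h = Bh h.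
Proof.
apply/seteqP; split => u.
  by move=> [v Bv <-]; rewrite add0.
by move=> Bu; exists u => //; rewrite add0.
Qed.

Lemma snorm_h_g h : 0 < h ->
  snorm_h rho add theta mu (g h) h = (omega h * m h - I h)%:E.
Proof.
move=> h0; rewrite -A_eq //; apply/eqP; rewrite eq_le; apply/andP; split.
  by apply: ge_ereal_sup => _ [x _ <-]; exact: int_T_le.
apply: ereal_sup_ubound; exists theta => //.
rewrite T_theta gee0_abs //.
by apply: integral_ge0 => u _; rewrite lee_fin g_ge0.
Qed.

Lemma snorm_g h : 0 < h ->
  snorm rho add theta mu (g h) = (omega h * m h - I h)%:E.
Proof.
move=> h0; apply/eqP; rewrite eq_le; apply/andP; split.
  apply: ge_ereal_sup => _ [h' h'0 <-]; rewrite -A_eq //.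
  by apply: ge_ereal_sup => _ [x _ <-]; exact: int_T_le.
by apply: ereal_sup_ubound; exists h => //; rewrite snorm_h_g.
Qed.

Lemma normB_g h : 0 < h -> normB (g h) = (omega h)%:E.
Proof.
move=> h0; apply/eqP; rewrite eq_le; apply/andP; split.
  apply: ge_ereal_sup => _ [x _ <-]; rewrite lee_fin ger0_norm ?g_ge0 //.
  exact: g_le.
apply: ereal_sup_ubound; exists theta => //.
rewrite g_theta // ger0_norm //.
by case: Hom => o0 _ _ _ _; rewrite o0 // ltW.
Qed.

Lemma I_ge0 h : 0 < h -> 0 <= I h.
Proof.
move=> h0; rewrite -lee_fin -Iomega_fin //.
by case: Hom => o0 _ _ _ _; apply: integral_ge0 => u _; rewrite lee_fin o0.
Qed.

Lemma normB_gS h : 0 < h ->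
  normB (fun x => (g h x - Sh rho add theta mu h (g h) x)%R) = (I h / m h)%:E.
Proof.
move=> h0; have [mE m0] := mBh h h0.
apply/eqP; rewrite eq_le; apply/andP; split.
  apply: ge_ereal_sup => _ [x _ <-]; rewrite lee_fin.
  apply: le_trans (core (g h) h x 1 h0 (g_Lloc h h0) ler01 _) _.
    by move=> y z; rewrite mul1r g_lip.
  by rewrite mul1r.
apply: ereal_sup_ubound; exists theta => //.
have -> : Sh rho add theta mu h (g h) theta = (omega h * m h - I h) / m h.
  rewrite /Sh.
  under eq_integral do rewrite add0.
  by rewrite A_eq.
rewrite g_theta //.
have -> : omega h - (omega h * m h - I h) / m h = I h / m h.
  by field; rewrite gt_eqF.
by rewrite ger0_norm // divr_ge0 ?I_ge0 // ltW.
Qed.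


Lemma main :
  let inv h := ((fine (mu (Bh h)))^-1)%:E in
  (forall (h : R) (f : X -> R), 0 < h ->
     in_H rho omega f -> in_Lh rho add theta mu f h ->
     (normB f <= normB (fun x => (f x - Sh rho add theta mu h f x)%R)
                 + snorm_h rho add theta mu f h * inv h
      <= normH rho omega f * inv h * Iomega rho theta mu omega h
         + snorm_h rho add theta mu f h * inv h)%E) /\
  (forall h : R, 0 < h ->
     let g := fe rho theta omega h in
     (normB g = (normB (fun x => (g x - Sh rho add theta mu h g x)%R)
                    + snorm_h rho add theta mu g h * inv h)%E /\
         (normB (fun x => (g x - Sh rho add theta mu h g x)%R)
            + snorm_h rho add theta mu g h * inv h
          = normH rho omega g * inv h * Iomega rho theta mu omega h
            + snorm_h rho add theta mu g h * inv h)%E /\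
         (in_H rho omega g /\ in_L rho add theta mu g) /\
         snorm rho add theta mu g = snorm_h rho add theta mu g h /\
         (forall f : X -> R, in_H rho omega f -> in_L rho add theta mu f ->
            (normB f <= normH rho omega f * inv h * Iomega rho theta mu omega h
                        + snorm rho add theta mu f * inv h)%E) /\
         normB g = (normH rho omega g * inv h * Iomega rho theta mu omega h
                    + snorm rho add theta mu g * inv h)%E)).
Proof.
move=> inv; split; first by move=> h f h0 fH fL; exact: part1.
move=> h h0 gg; rewrite /gg /inv.
have [mE m0] := mBh h h0.
have mn0 : m h != 0 by rewrite gt_eqF.
have E1 : normB (g h) = (normB (fun x => (g h x - Sh rho add theta mu h (g h) x)%R)
                    + snorm_h rho add theta mu (g h) h * ((m h)^-1)%:E)%E.
  rewrite normB_g // normB_gS // snorm_h_g // -EFinM -EFinD; congr EFin.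
  by field.
have E2 : (normB (fun x => (g h x - Sh rho add theta mu h (g h) x)%R)
            + snorm_h rho add theta mu (g h) h * ((m h)^-1)%:E
          = normH rho omega (g h) * ((m h)^-1)%:E * Iomega rho theta mu omega h
            + snorm_h rho add theta mu (g h) h * ((m h)^-1)%:E)%E.
  rewrite normB_gS // normH_g // Iomega_fin // -!EFinM; congr (EFin _ + _)%E.
  by rewrite mul1r mulrC.
have E4 : snorm rho add theta mu (g h) = snorm_h rho add theta mu (g h) h.
  by rewrite snorm_g // snorm_h_g.
split => //; split => //; split.
  split; first by rewrite /in_H normH_g // ltry.
  by split; [exact: g_Lloc | rewrite snorm_g // ltry].
split => //; split; last by rewrite E1 E2 E4.
move=> f fH [Lf fL].
have le1 : (snorm_h rho add theta mu f h <= snorm rho add theta mu f)%E.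
  by apply: ereal_sup_ubound; exists h.
have fLh : in_Lh rho add theta mu f h by split => //; exact: le_lt_trans le1 fL.
have /andP[P1 P2] := part1 h f h0 fH fLh.
apply: le_trans (le_trans P1 P2) _.
apply: leeD2l; apply: lee_wpmul2r => //.

Qed.

End Main.

Theorem theorem2 (R : realType) (d : measure_display) (X : measurableType d)
  (rho : X -> X -> R) (add : X -> X -> X) (theta : X)
  (mu : {measure set X -> \bar R}) (omega : R -> R)
  (Hset : standing_setting rho add theta mu) (Hom : modulus omega) :
  let inv h := ((fine (mu (Bh rho theta h)))^-1)%:E in
  (forall (h : R) (f : X -> R), 0 < h ->
     in_H rho omega f -> in_Lh rho add theta mu f h ->
     (normB f <= normB (fun x => (f x - Sh rho add theta mu h f x)%R)
                 + snorm_h rho add theta mu f h * inv h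
      <= normH rho omega f * inv h * Iomega rho theta mu omega h
         + snorm_h rho add theta mu f h * inv h)%E) /\
  (forall h : R, 0 < h ->
     let g := fe rho theta omega h in
     (normB g = (normB (fun x => (g x - Sh rho add theta mu h g x)%R)
                    + snorm_h rho add theta mu g h * inv h)%E /\
         (normB (fun x => (g x - Sh rho add theta mu h g x)%R)
            + snorm_h rho add theta mu g h * inv h
          = normH rho omega g * inv h * Iomega rho theta mu omega h
            + snorm_h rho add theta mu g h * inv h)%E /\
         (in_H rho omega g /\ in_L rho add theta mu g) /\
         snorm rho add theta mu g = snorm_h rho add theta mu g h /\
         (forall f : X -> R, in_H rho omega f -> in_L rho add theta mu f ->
            (normB f <= normH rho omega f * inv h * Iomega rho theta mu omega h
                        + snorm rho add theta mu f * inv h)%E) /\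
         normB g = (normH rho omega g * inv h * Iomega rho theta mu omega h
                    + snorm rho add theta mu g * inv h)%E)).
Proof.
move: Hset => [[rge0 [req0 [rC rtri]]] [om [_ [_ [a0 [tm [ti [ale [bp ci]]]]]]]]].
exact: (@main R d X rho add theta mu omega rge0 req0 rC rtri om a0 tm ti ale bp ci Hom).
Qed.
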